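(* Let $d \geq 1$ be an integer and let $v = (v_1,\dots,v_d) \in \mathbb{C}^d$. Then there exists a nonempty subset $S \subseteq [d] = \{1,\dots,d\}$ such that \[ \frac{1}{\sqrt{|S|}} \left| \sum_{j \in S} v_j \right| \geq \frac{\|v\|_2}{8\sqrt{\log_2(d) + 3}}, \] where $\|v\|_2 = \left(\sum_{j=1}^d |v_j|^2\right)^{1/2}$. *)

(* Defs.v *)
From Stdlib Require Import Reals.
From Coquelicot Require Import Coquelicot.
Open Scope R_scope.

(* Indices [d] = {1..d} are represented as 0..d-1. A subset S of [d] is a
   boolean predicate on nat, restricted to indices < d. *)

Fixpoint subset_sum (v : nat -> C) (S : nat -> bool) (d : nat) : C :=
  match d with
  | O => 0%C
  | Datatypes.S n => Cplus (subset_sum v S n) (if S n then v n else 0%C)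
  end.

Fixpoint subset_card (S : nat -> bool) (d : nat) : nat :=
  match d with
  | O => O
  | Datatypes.S n => (subset_card S n + (if S n then 1 else 0))%nat
  end.

Fixpoint norm2_sq (v : nat -> C) (d : nat) : R :=
  match d with
  | O => 0
  | Datatypes.S n => norm2_sq v n + (Cmod (v n)) ^ 2
  end.

Definition norm2 (v : nat -> C) (d : nat) : R := sqrt (norm2_sq v d).

Definition log2 (x : R) : R := ln x / ln 2.

(* Main.v *)
Require Import Defs.
From Stdlib Require Import Reals Lra Lia Classical Bool.
From Coquelicot Require Import Coquelicot.
Open Scope R_scope.
Local Open Scope bool_scope.

Fixpoint rsum (g : nat -> R) (S : nat -> bool) (n : nat) : R :=
  match n with
  | O => 0
  | Datatypes.S m => rsum g S m + (if S m then g m else 0)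
  end.

Fixpoint Hn (k : nat) : R :=
  match k with
  | O => 0
  | Datatypes.S m => Hn m + / INR (Datatypes.S m)
  end.

Lemma rsum_ext g S1 S2 n : (forall j, (j < n)%nat -> S1 j = S2 j) ->
  rsum g S1 n = rsum g S2 n.
Proof.
  induction n; simpl; intros H; auto.
  rewrite IHn by (intros; apply H; lia). rewrite H by lia. reflexivity.
Qed.

Lemma rsum_le g h S n : (forall j, (j < n)%nat -> S j = true -> g j <= h j) ->
  rsum g S n <= rsum h S n.
Proof.
  induction n; simpl; intros H; [lra|].
  assert (rsum g S n <= rsum h S n) by (apply IHn; intros; apply H; auto; lia).
  destruct (S n) eqn:E; [|lra]. specialize (H n ltac:(lia) E). lra.
Qed.

Lemma rsum_nonneg g S n : (forall j, (j < n)%nat -> S j = true -> 0 <= g j) ->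
  0 <= rsum g S n.
Proof.
  intros H. replace 0 with (rsum (fun _ => 0) S n).
  - apply rsum_le; auto.
  - clear H; induction n; simpl; auto. rewrite IHn; destruct (S n); lra.
Qed.

Lemma card_rsum S n : INR (subset_card S n) = rsum (fun _ => 1) S n.
Proof.
  induction n; simpl; auto. rewrite plus_INR, IHn. destruct (S n); simpl; lra.
Qed.

Lemma rsum_const_le g S n m : (forall j, (j < n)%nat -> S j = true -> m <= g j) ->
  INR (subset_card S n) * m <= rsum g S n.
Proof.
  intros H. rewrite card_rsum.
  replace (rsum (fun _ => 1) S n * m) with (rsum (fun _ => m) S n).
  - apply rsum_le; auto.
  - clear H; induction n; simpl; [lra|]. rewrite IHn; destruct (S n); lra.
Qed.

Lemma rsum_remove g T n j0 : (j0 < n)%nat -> T j0 = true ->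
  rsum g T n = rsum g (fun j => T j && negb (Nat.eqb j j0)) n + g j0.
Proof.
  induction n; intros Hj HT; [lia|]. simpl.
  destruct (Nat.eq_dec j0 n) as [->|Hne].
  - rewrite Nat.eqb_refl, HT. simpl.
    rewrite (rsum_ext g T (fun j => T j && negb (j =? n)%nat) n). lra.
    intros j Hj'. destruct (Nat.eqb_spec j n); [lia|]. now rewrite andb_true_r.
  - rewrite IHn by (auto; lia).
    destruct (Nat.eqb_spec n j0); [lia|]. rewrite andb_true_r. lra.
Qed.

Lemma argmin (a : nat -> R) T n : (exists j, (j < n)%nat /\ T j = true) ->
  exists j0, (j0 < n)%nat /\ T j0 = true /\
    forall j, (j < n)%nat -> T j = true -> a j0 <= a j.
Proof.
  induction n; intros [j [Hj HT]]; [lia|].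
  destruct (classic (exists j, (j < n)%nat /\ T j = true)) as [Hex|Hnex].
  - destruct (IHn Hex) as [j0 [H1 [H2 H3]]].
    destruct (T n) eqn:E.
    + destruct (Rle_dec (a j0) (a n)).
      * exists j0; repeat split; auto. intros k Hk HTk.
        destruct (Nat.eq_dec k n); [subst; auto|]. apply H3; auto; lia.
      * exists n; repeat split; auto. intros k Hk HTk.
        destruct (Nat.eq_dec k n); [subst; lra|].
        specialize (H3 k ltac:(lia) HTk). lra.
    + exists j0; repeat split; auto. intros k Hk HTk.
      destruct (Nat.eq_dec k n); [subst; congruence|]. apply H3; auto; lia.
  - assert (j = n). { destruct (Nat.eq_dec j n); auto. exfalso; apply Hnex; exists j; split; auto; lia. }
    subst. exists n; repeat split; auto. intros k Hk HTk.
    destruct (Nat.eq_dec k n); [subst; lra|]. exfalso; apply Hnex; exists k; split; auto; lia.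
Qed.

Lemma card_pos S n : (exists j, (j < n)%nat /\ S j = true) -> (1 <= subset_card S n)%nat.
Proof.
  induction n; intros [j [Hj HS]]; [lia|]. simpl.
  destruct (Nat.eq_dec j n). subst; rewrite HS; lia.
  assert (1 <= subset_card S n)%nat by (apply IHn; exists j; split; auto; lia). lia.
Qed.

Lemma core n c (a : nat -> R) : forall k T,
  subset_card T n = k ->
  (forall j, (j < n)%nat -> T j = true -> 0 <= a j) ->
  (forall S, (forall j, (j < n)%nat -> S j = true -> T j = true) ->
     (exists j, (j < n)%nat /\ S j = true) ->
     rsum a S n <= c * sqrt (INR (subset_card S n))) ->
  rsum (fun j => a j ^ 2) T n <= c ^ 2 * Hn k.
Proof.
  induction k; intros T Hk Hpos Hs.
  - simpl Hn. replace (c^2*0) with 0 by ring.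
    assert (Hn0 : forall j, (j < n)%nat -> T j = false).
    { intros j Hj. destruct (T j) eqn:E; auto.
      pose proof (card_pos T n ltac:(exists j; auto)). lia. }
    replace 0 with (rsum (fun j => a j ^ 2) (fun _ => false) n).
    + apply Req_le, rsum_ext. intros; rewrite Hn0; auto.
    + clear; induction n; [reflexivity| cbn [rsum]; rewrite IHn; ring].
  - assert (Hne : exists j, (j < n)%nat /\ T j = true).
    { apply NNPP; intro Hc. assert (subset_card T n = 0)%nat.
      { clear Hk Hpos Hs IHk. induction n; simpl; auto.
        destruct (T n) eqn:E. exfalso; apply Hc; exists n; split; auto.
        rewrite IHn; auto. intros [j [Hj HT]]; apply Hc; exists j; split; auto. }
      lia. }
    destruct (argmin a T n Hne) as [j0 [Hj0 [HT0 Hmin]]].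
    set (T' := fun j => T j && negb (Nat.eqb j j0)).
    assert (HcT : INR (subset_card T n) = INR (subset_card T' n) + 1).
    { rewrite !card_rsum. apply (rsum_remove (fun _ => 1) T n j0); auto. }
    assert (Hk' : subset_card T' n = k).
    { rewrite Hk, S_INR in HcT. apply INR_eq. lra. }
    assert (IH := IHk T' Hk').
    assert (IH' : rsum (fun j => a j ^ 2) T' n <= c ^ 2 * Hn k).
    { apply IH.
      - intros j Hj HT. apply Hpos; auto. unfold T' in HT. now apply andb_prop in HT.
      - intros S HS Hex. apply Hs; auto. intros j Hj HSj.
        specialize (HS j Hj HSj). unfold T' in HS. now apply andb_prop in HS. }
    rewrite (rsum_remove _ T n j0 Hj0 HT0). fold T'. cbn [Hn].
    assert (Hlow := rsum_const_le a T n (a j0) Hmin).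
    assert (Hup := Hs T (fun j _ H => H) Hne).
    rewrite Hk in Hlow, Hup.
    assert (Ha0 := Hpos j0 Hj0 HT0).
    set (K := INR (Datatypes.S k)) in *.
    assert (HK : 0 < K) by (unfold K; apply lt_0_INR; lia).
    assert (Hsq : sqrt K * sqrt K = K) by (apply sqrt_sqrt; lra).
    assert (Hsp : 0 < sqrt K) by (apply sqrt_lt_R0; lra).
    assert (H1 : K * a j0 <= c * sqrt K) by lra.
    assert (H2 : 0 <= c) by (destruct (Rle_dec 0 c); auto; nra).
    assert (H3 : (K * a j0)^2 <= (c * sqrt K)^2) by (apply pow_incr; split; nra).
    assert (H4 : K * (a j0 ^ 2) <= c^2) .
    { replace ((c * sqrt K)^2) with (c^2 * (sqrt K * sqrt K)) in H3 by ring. rewrite Hsq in H3.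
      nra. }
    assert (H5 : a j0 ^ 2 <= c^2 * / K).
    { apply (Rmult_le_reg_l K); auto. field_simplify; lra. }
    rewrite Rmult_plus_distr_l. lra.
Qed.

Lemma Hn_mono k d : (k <= d)%nat -> Hn k <= Hn d.
Proof.
  induction 1; [lra|]. cbn [Hn].
  assert (0 < / INR (Datatypes.S m)) by (apply Rinv_0_lt_compat, lt_0_INR; lia). lra.
Qed.

Lemma ln_step k : (1 <= k)%nat -> / INR (Datatypes.S k) <= ln (INR (Datatypes.S k)) - ln (INR k).
Proof.
  intros Hk. set (x := INR k). rewrite S_INR. fold x.
  assert (Hx : 1 <= x) by (unfold x; apply (le_INR 1); lia).
  rewrite <- ln_div by lra.
  pose proof (exp_ineq1_le (ln (x / (x+1)))) as H.
  rewrite exp_ln in H by (apply Rdiv_lt_0_compat; lra).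
  assert (E : x / (x+1) = 1 - / (x+1)) by (field; lra).
  assert (E2 : ln ((x+1)/x) = - ln (x/(x+1))).
  { rewrite !ln_div by lra. ring. }
  rewrite E2. lra.
Qed.

Lemma Hn_ln k : (1 <= k)%nat -> Hn k <= 1 + ln (INR k).
Proof.
  induction 1.
  - simpl. rewrite ln_1. lra.
  - cbn [Hn]. pose proof (ln_step m H). lra.
Qed.

Definition fq (q : nat) (z : C) : R :=
  match q with
  | O => fst z
  | 1%nat => - fst z
  | 2%nat => snd z
  | _ => - snd z
  end.

Lemma fq_le q z : fq q z <= Cmod z.
Proof.
  pose proof (Cmod2_alt z). pose proof (Cmod_ge_0 z). unfold Re, Im in *.
  assert (fq q z ^ 2 <= Cmod z ^ 2).
  { destruct q as [|[|[|]]]; simpl fq; nra. }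
  nra.
Qed.

Lemma fq_sum q v S n : fq q (subset_sum v S n) = rsum (fun j => fq q (v j)) S n.
Proof.
  induction n; [destruct q as [|[|[|]]]; simpl; lra|].
  cbn [subset_sum rsum]. rewrite <- IHn.
  destruct (S n); destruct q as [|[|[|]]]; unfold fq, Cplus; simpl; lra.
Qed.

Definition Tq (v : nat -> C) (q : nat) (j : nat) : bool :=
  if Rle_dec 0 (fq q (v j)) then
    if Rle_dec (Cmod (v j) ^ 2) (2 * fq q (v j) ^ 2) then true else false
  else false.

Lemma Tq_spec v q j : Tq v q j = true -> 0 <= fq q (v j) /\ Cmod (v j) ^ 2 <= 2 * fq q (v j) ^ 2.
Proof.
  unfold Tq. destruct Rle_dec; [|discriminate]. destruct Rle_dec; [|discriminate]. auto.
Qed.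

Lemma cover v j : exists q, (q < 4)%nat /\ Tq v q j = true.
Proof.
  pose proof (Cmod2_alt (v j)). unfold Re, Im in *.
  set (x := fst (v j)) in *. set (y := snd (v j)) in *.
  unfold Tq.
  destruct (Rle_dec (y^2) (x^2)).
  - destruct (Rle_dec 0 x).
    + exists 0%nat. split; [lia|]. simpl fq. fold x.
      destruct Rle_dec; [|lra]. destruct Rle_dec; [auto|]. nra.
    + exists 1%nat. split; [lia|]. simpl fq. fold x.
      destruct Rle_dec; [|lra]. destruct Rle_dec; [auto|]. nra.
  - destruct (Rle_dec 0 y).
    + exists 2%nat. split; [lia|]. simpl fq. fold y.
      destruct Rle_dec; [|lra]. destruct Rle_dec; [auto|]. nra.
    + exists 3%nat. split; [lia|]. simpl fq. fold y.
      destruct Rle_dec; [|lra]. destruct Rle_dec; [auto|]. nra.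
Qed.

Lemma cover_sum v n :
  norm2_sq v n <= rsum (fun j => Cmod (v j) ^ 2) (Tq v 0) n
                + rsum (fun j => Cmod (v j) ^ 2) (Tq v 1) n
                + rsum (fun j => Cmod (v j) ^ 2) (Tq v 2) n
                + rsum (fun j => Cmod (v j) ^ 2) (Tq v 3) n.
Proof.
  induction n; cbn [norm2_sq rsum]; [lra|].
  assert (Hc := cover v n). set (m := Cmod (v n) ^ 2) in *.
  assert (0 <= m) by (unfold m; apply pow2_ge_0).
  destruct Hc as [q [Hq HT]].
  destruct (Tq v 0 n) eqn:E0; destruct (Tq v 1 n) eqn:E1;
  destruct (Tq v 2 n) eqn:E2; destruct (Tq v 3 n) eqn:E3; try lra.
  exfalso. destruct q as [|[|[|[|]]]]; try congruence; lia.
Qed.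

Lemma norm2_sq_nonneg v n : 0 <= norm2_sq v n.
Proof. induction n; simpl; [lra|]. pose proof (pow2_ge_0 (Cmod (v n))). simpl in H. nra. Qed.

Theorem mainTheorem1 (d : nat) (v : nat -> C) (hd : (1 <= d)%nat) :
  exists S : nat -> bool,
    (exists j, (j < d)%nat /\ S j = true) /\
    / sqrt (INR (subset_card S d)) * Cmod (subset_sum v S d)
      >= norm2 v d / (8 * sqrt (log2 (INR d) + 3)).
Proof.
  apply NNPP; intro Hno.
  set (L := log2 (INR d)).
  set (c := norm2 v d / (8 * sqrt (L + 3))).
  assert (Hall : forall S, (exists j, (j < d)%nat /\ S j = true) ->
     / sqrt (INR (subset_card S d)) * Cmod (subset_sum v S d) < c).
  { intros S HS. apply Rnot_ge_lt. intro Hge. apply Hno. exists S; split; auto. }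
  assert (Hln2 : 0 < ln 2) by (pose proof ln_lt_2; lra).
  assert (Hln2' : ln 2 < 1).
  { rewrite <- (ln_exp 1). apply ln_increasing; [lra|].
    pose proof (exp_ineq1 1 ltac:(lra)). lra. }
  assert (Hd1 : 1 <= INR d) by (apply (le_INR 1); auto).
  assert (Hlnd : 0 <= ln (INR d)) by (rewrite <- ln_1; apply ln_le; lra).
  assert (HL : 0 <= L) by (unfold L, log2; apply Rdiv_le_0_compat; lra).
  assert (HlnL : ln (INR d) <= L).
  { unfold L, log2. apply (Rmult_le_reg_r (ln 2)); auto.
    unfold Rdiv. rewrite Rmult_assoc, Rinv_l by lra. nra. }
  assert (Hcard_sqrt : forall S, (exists j, (j < d)%nat /\ S j = true) ->
            0 < sqrt (INR (subset_card S d))).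
  { intros S HS. apply sqrt_lt_R0. apply lt_0_INR. pose proof (card_pos S d HS). lia. }
  assert (Hcpos : 0 < c).
  { set (S0 := fun j => Nat.eqb j 0).
    assert (HS0 : exists j, (j < d)%nat /\ S0 j = true) by (exists 0%nat; split; [lia|reflexivity]).
    pose proof (Hall S0 HS0). pose proof (Hcard_sqrt S0 HS0).
    pose proof (Cmod_ge_0 (subset_sum v S0 d)).
    assert (0 <= / sqrt (INR (subset_card S0 d))) by (left; apply Rinv_0_lt_compat; auto).
    nra. }
  set (Q := norm2_sq v d).
  assert (HsL : 0 < sqrt (L + 3)) by (apply sqrt_lt_R0; lra).
  assert (Hc2 : c ^ 2 = Q / (64 * (L + 3))).
  { unfold c, norm2. fold Q.
    assert (sqrt Q * sqrt Q = Q) by (apply sqrt_sqrt, norm2_sq_nonneg).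
    assert (sqrt (L+3) * sqrt (L+3) = L + 3) by (apply sqrt_sqrt; lra).
    replace ((sqrt Q / (8 * sqrt (L + 3))) ^ 2) with
      ((sqrt Q * sqrt Q) / (64 * (sqrt (L+3) * sqrt (L+3)))) by (field; lra).
    rewrite H, H0. reflexivity. }
  assert (HQ : 0 < Q).
  { destruct (norm2_sq_nonneg v d) as [|HQ0]; [assumption|].
    exfalso. unfold c, norm2 in Hcpos. rewrite <- HQ0, sqrt_0 in Hcpos.
    unfold Rdiv in Hcpos. rewrite Rmult_0_l in Hcpos. lra. }
  assert (Hq : exists q, Q <= 4 * rsum (fun j => Cmod (v j) ^ 2) (Tq v q) d).
  { pose proof (cover_sum v d). fold Q in H.
    destruct (Rle_dec Q (4 * rsum (fun j => Cmod (v j) ^ 2) (Tq v 0) d)); [exists 0%nat; auto|].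
    destruct (Rle_dec Q (4 * rsum (fun j => Cmod (v j) ^ 2) (Tq v 1) d)); [exists 1%nat; auto|].
    destruct (Rle_dec Q (4 * rsum (fun j => Cmod (v j) ^ 2) (Tq v 2) d)); [exists 2%nat; auto|].
    exists 3%nat. lra. }
  destruct Hq as [q Hq].
  set (a := fun j => fq q (v j)).
  assert (Ha2 : rsum (fun j => Cmod (v j) ^ 2) (Tq v q) d <= 2 * rsum (fun j => a j ^ 2) (Tq v q) d).
  { replace (2 * rsum (fun j => a j ^ 2) (Tq v q) d) with (rsum (fun j => 2 * a j ^ 2) (Tq v q) d).
    - apply rsum_le. intros j _ HT. apply Tq_spec in HT. unfold a. lra.
    - clear. induction d; cbn [rsum]; [ring|]. rewrite IHd. destruct (Tq v q d); ring. }
  assert (Hcore := core d c a (subset_card (Tq v q) d) (Tq v q) eq_refl).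
  assert (Hb : rsum (fun j => a j ^ 2) (Tq v q) d <= c ^ 2 * Hn (subset_card (Tq v q) d)).
  { apply Hcore.
    - intros j _ HT. apply Tq_spec in HT. unfold a. lra.
    - intros S _ HS. unfold a. rewrite <- fq_sum.
      pose proof (fq_le q (subset_sum v S d)).
      pose proof (Hall S HS). pose proof (Hcard_sqrt S HS).
      set (s := sqrt (INR (subset_card S d))) in *.
      assert (Cmod (subset_sum v S d) <= c * s).
      { apply (Rmult_le_reg_l (/ s)). apply Rinv_0_lt_compat; auto.
        rewrite <- Rmult_assoc, (Rmult_comm (/ s) c), Rmult_assoc, Rinv_l by lra. lra. }
      lra. }
  assert (Hcard : (subset_card (Tq v q) d <= d)%nat).
  { clear. induction d; simpl; [lia|]. destruct (Tq v q d); lia. }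
  pose proof (Hn_mono _ _ Hcard). pose proof (Hn_ln d hd).
  assert (Hfin : Q <= 8 * c ^ 2 * (1 + L)).
  { assert (0 <= c ^ 2) by (apply pow2_ge_0). nra. }
  rewrite Hc2 in Hfin.
  assert (Q * (64 * (L + 3)) <= 8 * Q * (1 + L)).
  { apply (Rmult_le_compat_r (64 * (L+3))) in Hfin; [|lra].
    replace (8 * (Q / (64 * (L + 3))) * (1 + L) * (64 * (L + 3))) with (8 * Q * (1 + L)) in Hfin
      by (field; lra). lra. }
  nra.
Qed.
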